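(* Let $\mathbf X\in\mathbb R^{n\times d}$ have full column rank and let $d\le k\le n$. Sample a set $S_\circ\subseteq\{1,\dots,n\}$ with $|S_\circ|=d$ with probability $\det(\mathbf X_{S_\circ})^2/\det(\mathbf X^\top\mathbf X)$, and then, given $S_\circ$, sample a uniformly random subset $R\subseteq\{1,\dots,n\}\setminus S_\circ$ of size $k-d$. Then $S=S_\circ\cup R$ satisfies, for every $S\subseteq\{1,\dots,n\}$ with $|S|=k$, $P(S)=\dfrac{\det(\mathbf X_S^\top\mathbf X_S)}{\binom{n-d}{k-d}\det(\mathbf X^\top\mathbf X)}$.
   Context: For $T\subseteq\{1,\dots,n\}$, $\mathbf X_T$ denotes the submatrix of $\mathbf X$ consisting of the rows indexed by $T$. *)

(* Defs.v *)
From HB Require Import structures.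
From mathcomp Require Import all_boot all_order all_algebra.
Set Implicit Arguments. Unset Strict Implicit. Unset Printing Implicit Defensive.
Import Order.TTheory GRing.Theory Num.Theory.
Local Open Scope ring_scope.

(* subrows X T m : the m x d matrix whose i-th row is the i-th row of X
   indexed by T (rows of T taken in increasing order); rows beyond #|T|
   are zero.  With m = #|T| this is exactly X_T. *)
Definition subrows (R : pzRingType) (n d : nat) (X : 'M[R]_(n, d))
  (T : {set 'I_n}) (m : nat) : 'M[R]_(m, d) :=
  \matrix_(i < m, j < d)
    match nth None (map Some (enum T)) i with
    | Some r => X r j
    | None => 0
    end.

Definition Xsub (R : pzRingType) (n d : nat) (X : 'M[R]_(n, d))
  (T : {set 'I_n}) : 'M[R]_(#|T|, d) := subrows X T #|T|.

Definition p_first (R : realFieldType) (n d : nat) (X : 'M[R]_(n, d))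
  (S0 : {set 'I_n}) : R :=
  if #|S0| == d then (\det (subrows X S0 d)) ^+ 2 / \det (X^T *m X) else 0.

Definition p_second (R : realFieldType) (n d k : nat)
  (S0 Rr : {set 'I_n}) : R :=
  if (Rr \subset ~: S0) && (#|Rr| == (k - d)%N) then
    1 / (#|[set T : {set 'I_n} | (T \subset ~: S0) && (#|T| == (k - d)%N)]|)%:R
  else 0.

Definition prob_S (R : realFieldType) (n d k : nat) (X : 'M[R]_(n, d))
  (S : {set 'I_n}) : R :=
  \sum_(S0 : {set 'I_n}) \sum_(Rr : {set 'I_n} | S0 :|: Rr == S)
     p_first X S0 * @p_second R n d k S0 Rr.

(* Main.v *)
Require Import Defs.
From HB Require Import structures.
From mathcomp Require Import all_boot all_order all_algebra all_fingroup.
Set Implicit Arguments. Unset Strict Implicit. Unset Printing Implicit Defensive.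
Import Order.TTheory GRing.Theory Num.Theory.
Local Open Scope ring_scope.
Definition rs (R : Type) d n (f : 'I_d -> 'I_n) (B : 'M[R]_(n, d)) : 'M[R]_d :=
  \matrix_(i, j) B (f i) j.
Definition cs (R : Type) d n (f : 'I_d -> 'I_n) (A : 'M[R]_(d, n)) : 'M[R]_d :=
  \matrix_(i, j) A i (f j).

Lemma CB1 (R : comPzRingType) d n (A : 'M[R]_(d,n)) (B : 'M[R]_(n,d)) :
  \det (A *m B) = \sum_(f : {ffun 'I_d -> 'I_n}) (\prod_i A i (f i)) * \det (rs f B).
Proof.
rewrite /determinant.
transitivity (\sum_(s : 'S_d) \sum_(f : {ffun 'I_d -> 'I_n})
   (-1) ^+ s * ((\prod_i A i (f i)) * \prod_i B (f i) (s i))).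
  apply: eq_bigr => s _; rewrite -big_distrr /=; congr (_ * _).
  rewrite (eq_bigr (fun i => \sum_j A i j * B j (s i))); last by move=> i _; rewrite mxE.
  rewrite bigA_distr_bigA /=; apply: eq_bigr => f _; by rewrite big_split.
rewrite exchange_big; apply: eq_bigr => f _ /=; rewrite big_distrr /=.
apply: eq_bigr => s _; rewrite mulrCA; congr (_ * (_ * _)).
by apply: eq_bigr => i _; rewrite mxE.
Qed.

Lemma CB2 (R : comPzRingType) d n (B : 'M[R]_(n,d)) (f : {ffun 'I_d -> 'I_n}) :
  ~~ injectiveb f -> \det (rs f B) = 0.
Proof.
case/injectivePn => i1 [i2 Di12 Ef12].
by apply: (determinant_alternate Di12) => j; rewrite !mxE Ef12.
Qed.
Definition eT n d (x0 : 'I_n) (T : {set 'I_n}) (i : 'I_d) : 'I_n := nth x0 (enum T) i.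

Definition hh n d (x0 : 'I_n) (p : {set 'I_n} * 'S_d) : {ffun 'I_d -> 'I_n} :=
  [ffun i => eT x0 p.1 (p.2 i)].

Definition hh' n d (x0 : 'I_n) (f : {ffun 'I_d -> 'I_n}) : {set 'I_n} * 'S_d :=
  (f @: setT, odflt 1%g [pick s : 'S_d | hh x0 (f @: setT, s) == f]).

Lemma eT_inj n (x0 : 'I_n) (T : {set 'I_n}) d : #|T| = d -> injective (@eT n d x0 T).
Proof.
move=> hT i j /eqP; rewrite /eT nth_uniq ?enum_uniq // ?(cardE T) -?cardE ?hT //.
  by move/eqP/val_inj.
Qed.

Lemma hhK n (x0 : 'I_n) d (f : {ffun 'I_d -> 'I_n}) :
  injectiveb f -> hh x0 (hh' x0 f) = f.
Proof.
move=> /injectiveP fi; rewrite /hh'.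
set T := f @: setT.
have cT : #|T| = d by rewrite card_imset // cardsT card_ord.
have inT i : f i \in enum T by rewrite mem_enum; apply: imset_f.
have ltd i : (index (f i) (enum T) < d)%N.
  by have := index_mem (f i) (enum T); rewrite inT -cardE cT.
pose sf (i : 'I_d) : 'I_d := Ordinal (ltd i).
have sfi : injective sf.
  move=> i j /(congr1 val) /= e; apply: fi.
  by rewrite -(nth_index x0 (inT i)) -(nth_index x0 (inT j)) e.
case: pickP => [s /eqP -> // | none].
have := none (perm sfi); rewrite /=.
suff -> : hh x0 (T, perm sfi) = f by rewrite eqxx.
by apply/ffunP => i; rewrite ffunE /eT /= permE /= nth_index.
Qed.

Lemma hh'K n (x0 : 'I_n) d (T : {set 'I_n}) (s : 'S_d) :
  #|T| = d -> hh' x0 (hh x0 (T, s)) = (T, s).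
Proof.
move=> cT.
have e1 : hh x0 (T, s) @: setT = T.
  apply/setP => x; apply/imsetP/idP.
    case=> i _ ->; rewrite ffunE /eT /= -mem_enum mem_nth // -cardE cT //.
  move=> xT.
  have lt : (index x (enum T) < d)%N.
    by have := index_mem x (enum T); rewrite mem_enum xT -cardE cT.
  exists ((s^-1)%g (Ordinal lt)) => //.
  by rewrite ffunE /eT /= permKV /= nth_index // mem_enum.
rewrite /hh' e1; congr pair.
case: pickP => [s' /eqP e | none]; last by have := none s; rewrite eqxx.
apply/permP => i; move/ffunP: e => /(_ i); rewrite !ffunE /=.
exact: eT_inj.
Qed.

Lemma hh_inj n (x0 : 'I_n) d (T : {set 'I_n}) (s : 'S_d) :
  #|T| = d -> injectiveb (hh x0 (T, s)).
Proof.
move=> cT; apply/injectiveP => i j; rewrite !ffunE /= => /(eT_inj cT).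
exact: perm_inj.
Qed.

Lemma CB_T (R : comPzRingType) d n (x0 : 'I_n) (A : 'M[R]_(d,n)) (B : 'M[R]_(n,d))
  (T : {set 'I_n}) :
  \det (cs (eT x0 T) A) * \det (rs (eT x0 T) B) =
  \sum_(s : 'S_d) (\prod_i A i (hh x0 (T, s) i)) * \det (rs (hh x0 (T, s)) B).
Proof.
have -> : \det (cs (eT x0 T) A) = \sum_(s : 'S_d) (-1) ^+ s * \prod_i A i (eT x0 T (s i)).
  by rewrite /determinant; apply: eq_bigr => s _; congr (_ * _); apply: eq_bigr => i _; rewrite mxE.
rewrite big_distrl /=; apply: eq_bigr => s _.
have -> : rs (hh x0 (T, s)) B = perm_mx s *m rs (eT x0 T) B.
  by rewrite -row_permE; apply/matrixP => i j; rewrite !mxE ffunE.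
rewrite det_mulmx det_perm [RHS]mulrCA mulrA; congr (_ * _ * _).
by apply: eq_bigr => i _; rewrite ffunE.
Qed.

Lemma CB (R : comPzRingType) d n (x0 : 'I_n) (A : 'M[R]_(d,n)) (B : 'M[R]_(n,d)) :
  \det (A *m B) = \sum_(T : {set 'I_n} | #|T| == d)
     \det (cs (eT x0 T) A) * \det (rs (eT x0 T) B).
Proof.
rewrite CB1 (bigID (fun f : {ffun 'I_d -> 'I_n} => injectiveb f)) /= [X in _ + X]big1 ?addr0; last first.
  by move=> f /CB2 ->; rewrite mulr0.
rewrite (reindex_onto (hh x0) (hh' x0)) /=; last by move=> f; exact: hhK.
rewrite (eq_bigl (fun p : {set 'I_n} * 'S_d => (#|p.1| == d) && true)); last first.
  move=> [T s] /=; rewrite andbT; apply/andP/eqP.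
    case=> /injectiveP fi /eqP e; rewrite -[T](congr1 fst e) /=.
    by rewrite card_imset // cardsT card_ord.
  by move=> cT; rewrite hh_inj // hh'K.
rewrite -(pair_big_dep (fun T : {set 'I_n} => #|T| == d) (fun _ (_ : 'S_d) => true)
   (fun T s => (\prod_i A i (hh x0 (T, s) i)) * \det (rs (hh x0 (T, s)) B))) /=.
by apply: eq_bigr => T _; rewrite CB_T.
Qed.
Definition Ymx (R : pzRingType) n d (X : 'M[R]_(n, d)) (S : {set 'I_n}) : 'M[R]_(n, d) :=
  \matrix_(i, j) if i \in S then X i j else 0.

Lemma XsubTX (R : comPzRingType) n d (X : 'M[R]_(n, d)) (S : {set 'I_n}) :
  (Xsub X S)^T *m Xsub X S = (Ymx X S)^T *m Ymx X S.
Proof.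
apply/matrixP => a b; rewrite !mxE.
transitivity (\sum_(x in S) X x a * X x b).
  rewrite [RHS]big_enum_val; apply: eq_bigr => i _; rewrite !mxE.
  have lt : (i < size (enum S))%N by rewrite -cardE.
  by rewrite (nth_map (enum_val i)) // -enum_val_nth.
rewrite big_mkcond /=; apply: eq_bigr => i _; rewrite !mxE.
by case: (i \in S); rewrite ?mul0r.
Qed.

Lemma detXsub (R : comPzRingType) n d (X : 'M[R]_(n, d)) (S : {set 'I_n}) (x0 : 'I_n) :
  \det ((Xsub X S)^T *m Xsub X S) =
  \sum_(T : {set 'I_n} | (T \subset S) && (#|T| == d)) \det (subrows X T d) ^+ 2.
Proof.
rewrite XsubTX (CB x0) [RHS]big_mkcondl /=; apply: eq_bigr => T /eqP cT.
have -> : cs (eT x0 T) (Ymx X S)^T = (rs (eT x0 T) (Ymx X S))^T.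
  by apply/matrixP => i j; rewrite !mxE.
rewrite det_tr -expr2.
case: ifP => [sTS | /negbT nsTS].
  congr (\det _ ^+ 2); apply/matrixP => i j; rewrite !mxE.
  have lt : (i < size (enum T))%N by rewrite -cardE cT.
  rewrite (nth_map x0) // /eT.
  have : nth x0 (enum T) i \in T by rewrite -mem_enum mem_nth.
  by move/(subsetP sTS) => ->.
case/subsetPn: nsTS => x xT xS.
have lt : (index x (enum T) < d)%N.
  by have := index_mem x (enum T); rewrite mem_enum xT -cardE cT.
rewrite (expand_det_row _ (Ordinal lt)) big1; first by rewrite expr2 mul0r.
by move=> j _; rewrite !mxE /eT /= nth_index ?mem_enum // (negbTE xS) mul0r.
Qed.

Lemma inner (R : realFieldType) n d k (X : 'M[R]_(n, d)) (S0 S : {set 'I_n})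
  (hS : #|S| = k) (hdk : (d <= k)%N) :
  \sum_(Rr : {set 'I_n} | S0 :|: Rr == S) p_first X S0 * @p_second R n d k S0 Rr =
  if (S0 \subset S) && (#|S0| == d) then p_first X S0 / ('C(n - d, k - d))%:R else 0.
Proof.
case: (boolP (#|S0| == d)) => [/eqP c0 | c0]; last first.
  by rewrite andbF big1 // => Rr _; rewrite /p_first (negbTE c0) mul0r.
rewrite andbT; case: (boolP (S0 \subset S)) => [sS | nsS]; last first.
  by rewrite big1 // => Rr /eqP e; case/negP: nsS; rewrite -e subsetUl.
rewrite (bigD1 (S :\: S0)) /=; last first.
  apply/eqP/setP => x; rewrite !inE.
  by case xS0: (x \in S0) => //=; rewrite (subsetP sS).
rewrite big1 ?addr0; last first.
  move=> Rr /andP [/eqP e ne]; rewrite /p_second.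
  case: ifP => [/andP [sub _] | _]; last by rewrite mulr0.
  case/eqP: ne; apply/setP => x; rewrite -e !inE.
  have := subsetP sub x; rewrite !inE.
  by case: (x \in Rr); case: (x \in S0) => //= /(_ isT).
rewrite /p_second subsetDr /=.
have -> : #|S :\: S0| == (k - d)%N by rewrite cardsD (setIidPr sS) hS c0.
rewrite /= cards_draws.
have -> : #|~: S0| = (n - d)%N by have := cardsC S0; rewrite card_ord c0 => h; rewrite -[in RHS]h addKn.
by rewrite mul1r.
Qed.

Lemma detXsub_all (R : comPzRingType) n d k (X : 'M[R]_(n, d)) (S : {set 'I_n})
  (hS : #|S| = k) (hdk : (d <= k)%N) :
  \det ((Xsub X S)^T *m Xsub X S) =
  \sum_(T : {set 'I_n} | (T \subset S) && (#|T| == d)) \det (subrows X T d) ^+ 2.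
Proof.
case: d X hdk => [|d] X hdk.
  rewrite det_mx00 (eq_bigl (pred1 set0)); last first.
    by move=> T; rewrite cards_eq0 /= andbC; case: eqP => [-> |] //=; rewrite sub0set.
  by rewrite big_pred1_eq det_mx00 expr1n.
have : (0 < #|S|)%N by rewrite hS (leq_trans _ hdk).
case/card_gt0P => x0 _; exact: detXsub.
Qed.

Unset Implicit Arguments.
Theorem mainTheorem6 (R : realFieldType) (n d k : nat) (X : 'M[R]_(n, d))
  (hrank : \rank X = d) (hdk : (d <= k)%N) (hkn : (k <= n)%N)
  (S : {set 'I_n}) (hS : #|S| = k) :
  @prob_S R n d k X S =
  \det ((Xsub X S)^T *m Xsub X S) / ('C(n - d, k - d)%:R * \det (X^T *m X)).
Proof.
rewrite /prob_S (eq_bigr (fun S0 : {set 'I_n} => if (S0 \subset S) && (#|S0| == d)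
   then p_first X S0 / ('C(n - d, k - d))%:R else 0)); last first.
  by move=> S0 _; apply: inner.
rewrite -big_mkcond /= (detXsub_all X hS hdk) invfM big_distrl /=.
apply: eq_bigr => S0 /andP [_ /eqP c0].
by rewrite /p_first c0 eqxx mulrA mulrAC.
Qed.
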